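(* Let $C$ be a linear code over $\mathbb{Z}_4+u\mathbb{Z}_4$ of length $n$, let $D$ be a non-zero linear code over $\mathbb{Z}_4$ and $E$ a non-zero linear code over $\mathbb{F}_2+u\mathbb{F}_2$ such that $\mu(C)=D$ and $\alpha(C)=E$. Let $d,d',d''$ denote the minimum Lee weights of $C$, $D$ and $E$ respectively. Then $d\le 2d'$ and $d\le 2d''$.
   Context: $\mathbb{Z}_4+u\mathbb{Z}_4$ is the commutative ring of characteristic $4$ with $u^2=0$; $\mathbb{F}_2+u\mathbb{F}_2$ is the commutative ring $\{0,1,u,1+u\}$ of characteristic $2$ with $u^2=0$. A linear code over a ring $R$ is an $R$-submodule of $R^n$. Lee weights: on $\mathbb{Z}_4$, $w_L(0)=0,w_L(1)=w_L(3)=1,w_L(2)=2$; on $\mathbb{Z}_4+u\mathbb{Z}_4$, $w_L(a+ub)=w_L(b)+w_L(a+b)$; on $\mathbb{F}_2+u\mathbb{F}_2$, $w_L(0)=0$, $w_L(1)=w_L(1+u)=1$, $w_L(u)=2$; all extended additively to vectors; minimum Lee weight is the minimum over nonzero codewords. For $\overline{a},\overline{b}\in\mathbb{Z}_4^n$, $\mu(\overline{a}+u\overline{b})=\overline{a}$; $\alpha$ is coordinatewise reduction modulo $2$ from $\mathbb{Z}_4+u\mathbb{Z}_4$ to $\mathbb{F}_2+u\mathbb{F}_2$. *)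

(* Defs.v *)
From mathcomp Require Import all_boot all_algebra.
Set Implicit Arguments. Unset Strict Implicit. Unset Printing Implicit Defensive.
Import GRing.Theory.
Local Open Scope ring_scope.

Notation Z4 := 'Z_4.
Notation F2 := 'Z_2.

(* Element a + u b of Z4 + uZ4 is the pair (a, b); u^2 = 0. *)
Definition RZ4 := (Z4 * Z4)%type.
Definition addRZ4 (x y : RZ4) : RZ4 := (x.1 + y.1, x.2 + y.2).
Definition mulRZ4 (x y : RZ4) : RZ4 := (x.1 * y.1, x.1 * y.2 + x.2 * y.1).
Definition zeroRZ4 : RZ4 := (0, 0).

(* Element a + u b of F2 + uF2 is the pair (a, b); u^2 = 0. *)
Definition RF2 := (F2 * F2)%type.
Definition addRF2 (x y : RF2) : RF2 := (x.1 + y.1, x.2 + y.2).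
Definition mulRF2 (x y : RF2) : RF2 := (x.1 * y.1, x.1 * y.2 + x.2 * y.1).
Definition zeroRF2 : RF2 := (0, 0).

Definition linear_RZ4 n (C : {set {ffun 'I_n -> RZ4}}) : Prop :=
  [/\ [ffun=> zeroRZ4] \in C,
      forall x y, x \in C -> y \in C -> [ffun i => addRZ4 (x i) (y i)] \in C
    & forall (r : RZ4) x, x \in C -> [ffun i => mulRZ4 r (x i)] \in C].

Definition linear_Z4 n (C : {set {ffun 'I_n -> Z4}}) : Prop :=
  [/\ [ffun=> 0] \in C,
      forall x y, x \in C -> y \in C -> [ffun i => x i + y i] \in C
    & forall (r : Z4) x, x \in C -> [ffun i => r * x i] \in C].

Definition linear_RF2 n (C : {set {ffun 'I_n -> RF2}}) : Prop :=
  [/\ [ffun=> zeroRF2] \in C,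
      forall x y, x \in C -> y \in C -> [ffun i => addRF2 (x i) (y i)] \in C
    & forall (r : RF2) x, x \in C -> [ffun i => mulRF2 r (x i)] \in C].

Definition leeZ4 (x : Z4) : nat :=
  match nat_of_ord x with 0 => 0 | 2 => 2 | _ => 1 end%N.
Definition leeRZ4 (x : RZ4) : nat := (leeZ4 x.2 + leeZ4 (x.1 + x.2)%R)%N.
Definition leeRF2 (x : RF2) : nat :=
  match nat_of_ord x.1, nat_of_ord x.2 with
  | 0, 0 => 0 | 0, _ => 2 | _, _ => 1 end%N.

Definition wtZ4 n (x : {ffun 'I_n -> Z4}) : nat := (\sum_i leeZ4 (x i))%N.
Definition wtRZ4 n (x : {ffun 'I_n -> RZ4}) : nat := (\sum_i leeRZ4 (x i))%N.
Definition wtRF2 n (x : {ffun 'I_n -> RF2}) : nat := (\sum_i leeRF2 (x i))%N.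

Definition is_min_weight (T : finType) (zero : T) (wt : T -> nat)
    (C : {set T}) (d : nat) : Prop :=
  (exists2 c, c \in C & c != zero /\ wt c = d) /\
  (forall c, c \in C -> c != zero -> (d <= wt c)%N).

Definition mu n (x : {ffun 'I_n -> RZ4}) : {ffun 'I_n -> Z4} := [ffun i => (x i).1].
Definition red2 (a : Z4) : F2 := (nat_of_ord a)%:R.
Definition alpha n (x : {ffun 'I_n -> RZ4}) : {ffun 'I_n -> RF2} :=
  [ffun i => (red2 (x i).1, red2 (x i).2)].

(* Main.v *)
Require Import Defs.
From mathcomp Require Import all_boot all_algebra.
Local Open Scope ring_scope.

Lemma z4cases (P : Z4 -> Prop) : P (inZp 0) -> P (inZp 1) -> P (inZp 2) -> P (inZp 3) -> forall a, P a.
Proof.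
move=> H0 H1 H2 H3 [[|[|[|[|k]]]] Hk].
- by have -> : Ordinal Hk = inZp 0 by apply: val_inj.
- by have -> : Ordinal Hk = inZp 1 by apply: val_inj.
- by have -> : Ordinal Hk = inZp 2 by apply: val_inj.
- by have -> : Ordinal Hk = inZp 3 by apply: val_inj.
- by [].
Qed.

Lemma pt1 (p : RZ4) : leeRZ4 (mulRZ4 (0, 1) p) = (2 * leeZ4 p.1)%N.
Proof. case: p => a b; elim/z4cases: a; elim/z4cases: b. all: by vm_compute. Qed.

Lemma pt1z (p : RZ4) : mulRZ4 (0, 1) p = zeroRZ4 -> p.1 = 0.
Proof. move/eqP => H; apply/eqP; move: H; apply/implyP; move: p. case => a b; elim/z4cases: a; elim/z4cases: b. all: by vm_compute. Qed.

Lemma pt2 (p : RZ4) : (leeRZ4 (mulRZ4 (2%:R, 0%R : Z4) p) <= 2 * leeRF2 (red2 p.1, red2 p.2))%N.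
Proof. case: p => a b; elim/z4cases: a; elim/z4cases: b. all: by vm_compute. Qed.

Lemma pt2z (p : RZ4) : mulRZ4 (2%:R, 0%R : Z4) p = zeroRZ4 -> (red2 p.1, red2 p.2) = zeroRF2.
Proof. move/eqP => H; apply/eqP; move: H; apply/implyP; move: p. case => a b; elim/z4cases: a; elim/z4cases: b. all: by vm_compute. Qed.

Theorem theorem4p6 (n : nat) (C : {set {ffun 'I_n -> RZ4}})
    (D : {set {ffun 'I_n -> Z4}}) (E : {set {ffun 'I_n -> RF2}})
    (d d' d'' : nat) :
  linear_RZ4 C -> linear_Z4 D -> linear_RF2 E ->
  D != [set [ffun=> 0]] -> E != [set [ffun=> zeroRF2]] ->
  [set mu c | c in C] = D -> [set alpha c | c in C] = E ->
  is_min_weight [ffun=> zeroRZ4] (@wtRZ4 n) C d ->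
  is_min_weight [ffun=> 0] (@wtZ4 n) D d' ->
  is_min_weight [ffun=> zeroRF2] (@wtRF2 n) E d'' ->
  (d <= 2 * d')%N /\ (d <= 2 * d'')%N.
Proof.
move=> [_ _ HC] _ _ _ _ HD HE [_ Hd] [[x xD [xn <-]] _] [[y yE [yn <-]] _].
split.
- rewrite -HD in xD; case/imsetP: xD => c cC ->{x} in xn *.
  set c' := [ffun i => mulRZ4 (0, 1) (c i)].
  have -> : (2 * wtZ4 (mu c) = wtRZ4 c')%N.
    rewrite /wtZ4 /wtRZ4 big_distrr /=; apply: eq_bigr => i _.
    by rewrite !ffunE pt1.
  apply: Hd; first exact: HC.
  apply: contra xn => /eqP Hz; apply/eqP/ffunP => i.
  move/ffunP/(_ i): Hz; rewrite !ffunE => /pt1z ->; by [].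
- rewrite -HE in yE; case/imsetP: yE => c cC ->{y} in yn *.
  set c' := [ffun i => mulRZ4 (2%:R, 0%R : Z4) (c i)].
  apply: (@leq_trans (wtRZ4 c')).
    apply: Hd; first exact: HC.
    apply: contra yn => /eqP Hz; apply/eqP/ffunP => i.
    move/ffunP/(_ i): Hz; rewrite !ffunE => /pt2z ->; by [].
  rewrite /wtRF2 /wtRZ4 big_distrr /=; apply: leq_sum => i _.
  by rewrite !ffunE pt2.
Qed.
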